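(* Let $U=(u_{ij}),V=(v_{ij})\in\mathcal{U}_d(\mathbb{C})$, and let $R_U=(r_{ij})$, $R_V=(s_{ij})$ be real matrices with non-negative entries such that $r_{ij}=0$ iff $u_{ij}=0$ (and $r_{ij}>0$ otherwise), and $s_{ij}=0$ iff $v_{ij}=0$ (and $s_{ij}>0$ otherwise). Then there exists $D\in\mathcal{DU}_d(\mathbb{C})$ such that for all $k,l\in\{1,\dots,d\}$, $$(R_UR_V)_{kl}\neq 0\iff (UDV)_{kl}\neq 0.$$
   Context: $\mathcal{U}_d(\mathbb{C})$ denotes the group of $d\times d$ unitary matrices and $\mathcal{DU}_d(\mathbb{C})$ its subgroup of diagonal unitary matrices. *)

(* Defs.v *)
From HB Require Import structures.
From mathcomp Require Import all_boot all_order all_algebra.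
From mathcomp Require Import complex.
From mathcomp Require Import reals.
Set Implicit Arguments. Unset Strict Implicit. Unset Printing Implicit Defensive.
Import Order.TTheory GRing.Theory Num.Theory.
Local Open Scope ring_scope.

Definition adjmx (R : rcfType) (m n : nat) (A : 'M[R[i]]_(m, n)) : 'M[R[i]]_(n, m) :=
  (map_mx (@conjc R) A)^T.

Definition unitary_mx (R : rcfType) (d : nat) (U : 'M[R[i]]_d) : Prop :=
  U *m adjmx U = 1%:M.

Definition diag_unitary_mx (R : rcfType) (d : nat) (D : 'M[R[i]]_d) : Prop :=
  unitary_mx D /\ is_diag_mx D.

(* Main.v *)
Require Import Defs.
From HB Require Import structures.
From mathcomp Require Import all_boot all_order all_algebra.
From mathcomp Require Import complex.
From mathcomp Require Import reals.
From mathcomp Require Import ring lra.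
Import Order.TTheory GRing.Theory Num.Theory.
Local Open Scope ring_scope.

Definition lam (R : realType) (n : nat) : R[i] :=
  Complex ((1 - n%:R^+2)/(1+n%:R^+2)) (2*n%:R/(1+n%:R^+2)).
Lemma lam_norm (R : realType) n : lam R n * conjc (lam R n) = 1.
Proof.
have h : (1 + n%:R^+2 : R) != 0 by rewrite gt_eqF // ltr_pwDl // exprn_ge0.
apply/eqP; rewrite eq_complex /=; apply/andP; split; apply/eqP.
 by field.
by ring.
Qed.
Lemma lam_inj (R : realType) : injective (lam R).
Proof.
move=> n m /eqP; rewrite eq_complex /= => /andP [/eqP h _].
have hn : (1 + n%:R^+2 : R) != 0 by rewrite gt_eqF // ltr_pwDl // exprn_ge0.
have hm : (1 + m%:R^+2 : R) != 0 by rewrite gt_eqF // ltr_pwDl // exprn_ge0.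
have : (n%:R^+2 : R) = m%:R^+2.
  move/eqP: h; rewrite eqr_div // => /eqP h; nra.
by rewrite -!natrX => /eqP; rewrite eqr_nat eqn_exp2r // => /eqP.
Qed.
Theorem lemma22 (R : realType) (d : nat) (U V : 'M[R[i]]_d) (RU RV : 'M[R]_d) :
  unitary_mx U -> unitary_mx V ->
  (forall i j, 0 <= RU i j) -> (forall i j, 0 <= RV i j) ->
  (forall i j, RU i j = 0 <-> U i j = 0) ->
  (forall i j, RV i j = 0 <-> V i j = 0) ->
  exists D : 'M[R[i]]_d, diag_unitary_mx D /\
    forall k l, (RU *m RV) k l != 0 <-> (U *m D *m V) k l != 0.
Proof.
move=> _ _ RU0 RV0 hU hV.
pose c k l (j : 'I_d) := U k j * V j l.
pose p k l : {poly R[i]} := \sum_(j < d) c k l j *: 'X^j.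
have pE k l x : (p k l).[x] = \sum_(j < d) c k l j * x ^+ j.
  by rewrite horner_sum; apply: eq_bigr => j _; rewrite hornerZ hornerXn.
have p0 k l : p k l = 0 <-> forall j, c k l j = 0.
  split; last by move=> h; rewrite /p big1 // => j _; rewrite h scale0r.
  move=> h j; have := congr1 (fun q : {poly R[i]} => q`_j) h.
  rewrite coef_sum coef0 (bigD1 j) //= coefZ coefXn eqxx mulr1 big1 ?addr0 //.
  move=> j' ne; rewrite coefZ coefXn.
  suff -> : (nat_of_ord j == nat_of_ord j') = false by rewrite mulr0.
  by apply/negbTE; rewrite eq_sym.
pose P := \prod_(kl : 'I_d * 'I_d | p kl.1 kl.2 != 0) p kl.1 kl.2.
have P0 : P != 0 by apply/prodf_neq0 => kl.
have [n Pn] : exists n, ~~ root P (lam R n).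
  pose rs := map (lam R) (iota 0 (size P)).
  have : ~~ all (root P) rs.
    apply/negP => hall.
    have := max_poly_roots P0 hall (etrans (map_inj_uniq (@lam_inj R) _) (iota_uniq _ _)).
    by rewrite size_map size_iota ltnn.
  by case/allPn => x /mapP [n _ ->] hn; exists n.
set x := lam R n.
exists (diag_mx (\row_(j < d) x ^+ j)).
split; first split; last first.
- move=> k l.
  have E : (U *m diag_mx (\row_(j < d) x ^+ j) *m V) k l = (p k l).[x].
    rewrite pE mul_mx_diag !mxE; apply: eq_bigr => j _; rewrite !mxE /c.
    by rewrite mulrAC.
  have RR : (RU *m RV) k l == 0 <-> forall j, c k l j = 0.
    rewrite mxE; split.
      move/eqP => hs j; have := @psumr_eq0P _ _ _ _ (fun j _ => mulr_ge0 (RU0 k j) (RV0 j l)) hs j isT.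
      rewrite /c; move=> /eqP; rewrite mulf_eq0 => /orP [/eqP/hU|/eqP/hV] ->;
        by rewrite ?mul0r ?mulr0.
    move=> hc; apply/eqP; apply: big1 => j _.
    have /eqP := hc j; rewrite /c mulf_eq0 => /orP [/eqP/hU|/eqP/hV] ->;
      by rewrite ?mul0r ?mulr0.
  rewrite E; split.
    move=> h.
    have pn : p k l != 0 by apply/eqP => /p0 hc; move/negP: h; apply; exact: (proj2 RR).
    move: Pn; rewrite /root /P horner_prod => /prodf_neq0 /(_ (k, l)) /=.
    by apply.
  move=> h; apply/negP => /(proj1 RR)/p0 hp; move: h; by rewrite hp horner0 eqxx.
- exact: diag_mx_is_diag.
- apply/matrixP => i j; rewrite !mxE (bigD1 i) //= big1 ?addr0; last first.
    by move=> k /negbTE ne; rewrite !mxE eq_sym ne mulr0n mul0r.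
  rewrite !mxE eqxx mulr1n.
  case: (eqVneq i j) => [<-|ne]; last by rewrite mulr0n rmorph0 mulr0.
  rewrite !mulr1n rmorphXn -exprMn /x lam_norm expr1n //.
Qed.
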